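(* Let $V\in(\mathbb{R}\cup\{-\infty\})^{n\times p}$ have no row and no column identically equal to $-\infty$, and $E=\{(i,k):V_{ik}\neq-\infty\}$. The operator $$T_i(x)=\inf_{k\in[p],\,(i,k)\in E}\Big[-V_{ik}+\max_{j\in[n],\,j\neq i}(V_{jk}+x_j)\Big],\qquad i\in[n],$$ can be evaluated at any point $x$ in $O(|E|)$ arithmetic operations.
   Context: $-\infty+c=-\infty$, $\max\emptyset=-\infty$. *)

(* Defs.v *)
From HB Require Import structures.
From mathcomp Require Import all_boot all_order all_algebra.
From mathcomp Require Import all_classical all_reals.
From mathcomp Require Import ereal.
Set Implicit Arguments. Unset Strict Implicit. Unset Printing Implicit Defensive.
Import Order.TTheory GRing.Theory Num.Theory.
Local Open Scope ring_scope.
Local Open Scope ereal_scope.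

Definition Top (R : realType) (n p : nat) (V : 'M[\bar R]_(n, p))
    (x : 'I_n -> R) (i : 'I_n) : \bar R :=
  \big[Order.min/+oo]_(k < p | V i k != -oo)
     (- V i k + \big[Order.max/-oo]_(j < n | j != i) (V j k + (x j)%:E)).

Definition supp (R : realType) (n p : nat) (V : 'M[\bar R]_(n, p)) :
    {set 'I_n * 'I_p} := [set ik | V ik.1 ik.2 != -oo].

Definition no_minf_row (R : realType) (n p : nat) (V : 'M[\bar R]_(n, p)) :=
  forall i : 'I_n, exists k : 'I_p, V i k != -oo.
Definition no_minf_col (R : realType) (n p : nat) (V : 'M[\bar R]_(n, p)) :=
  forall k : 'I_p, exists i : 'I_n, V i k != -oo.

(* Cost model: straight-line programs over \bar R.  Each instruction is one
   arithmetic operation (constants and input loads are also counted, which is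
   only conservative).  Register r holds the value of the r-th instruction;
   operands refer to registers by index (out-of-range / forward references
   read -oo). *)
Inductive instr (R : realType) (n : nat) : Type :=
  | ICst of \bar R
  | IInp of 'I_n
  | IAdd of nat & nat
  | IOpp of nat
  | IMax of nat & nat
  | IMin of nat & nat.

Definition eval_instr (R : realType) (n : nat) (x : 'I_n -> R)
    (regs : seq (\bar R)) (ins : instr R n) : \bar R :=
  let rd a := nth -oo regs a in
  match ins with
  | ICst c => c
  | IInp j => (x j)%:E
  | IAdd a b => rd a + rd b
  | IOpp a => - rd a
  | IMax a b => Order.max (rd a) (rd b)
  | IMin a b => Order.min (rd a) (rd b)
  end.

Definition run (R : realType) (n : nat) (x : 'I_n -> R) (prog : seq (instr R n))
    : seq (\bar R) :=
  foldl (fun regs ins => rcons regs (eval_instr x regs ins)) [::] prog.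

(* Main.v *)
Require Import Defs.
From HB Require Import structures.
From mathcomp Require Import all_boot all_order all_algebra.
From mathcomp Require Import all_classical all_reals.
From mathcomp Require Import ereal.
From mathcomp Require Import zify.
Import Order.TTheory GRing.Theory Num.Theory.
Set Implicit Arguments. Unset Strict Implicit. Unset Printing Implicit Defensive.
Local Open Scope ring_scope.
Local Open Scope ereal_scope.
Local Open Scope nat_scope.

Section Run.
Variables (R : realType) (n : nat) (x : 'I_n -> R).
Notation instr := (instr R n).

Lemma run_rcons (prog : seq instr) ins :
  run x (rcons prog ins) = rcons (run x prog) (eval_instr x (run x prog) ins).
Proof. by rewrite /run -cats1 foldl_cat. Qed.

Lemma run_rcons' (prog : seq instr) ins :
  run x (rcons prog ins) = run x prog ++ [:: eval_instr x (run x prog) ins].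
Proof. by rewrite run_rcons cats1. Qed.

Lemma size_run (prog : seq instr) : size (run x prog) = size prog.
Proof. elim/last_ind: prog => [|p i IH]; first by []. by rewrite run_rcons !size_rcons IH. Qed.

Lemma run_cat (P Q : seq instr) : exists W, run x (P ++ Q) = run x P ++ W.
Proof.
elim/last_ind: Q => [|Q i [W IH]]; first by exists [::]; rewrite !cats0.
exists (rcons W (eval_instr x (run x (P ++ Q)) i)).
by rewrite -rcons_cat run_rcons {1}IH rcons_cat.
Qed.

Lemma nth_ext (regs W : seq (\bar R)) a : a < size regs ->
  nth -oo%E (regs ++ W) a = nth -oo%E regs a.
Proof. by move=> h; rewrite nth_cat h. Qed.

Lemma nth_run_cat (P Q : seq instr) r : r < size P ->
  nth -oo%E (run x (P ++ Q)) r = nth -oo%E (run x P) r.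
Proof. by move=> h; have [W ->] := run_cat P Q; rewrite nth_ext // size_run. Qed.

Fixpoint opchain (mk : nat -> nat -> instr) (q : nat) (addrs : seq nat) : seq instr :=
  if addrs is a :: s then mk q a :: opchain mk q.+1 s else [::].

Lemma size_opchain mk q addrs : size (opchain mk q addrs) = size addrs.
Proof. by elim: addrs q => //= a s IH q; rewrite IH. Qed.

Lemma opchainP mk (f : \bar R -> \bar R -> \bar R)
  (Hmk : forall regs a b, eval_instr x regs (mk a b) = f (nth -oo%E regs a) (nth -oo%E regs b)) :
  forall addrs vs pre q acc, size pre = q.+1 -> nth -oo%E (run x pre) q = acc ->
   size vs = size addrs ->
   (forall u, u < size addrs -> nth 0 addrs u <= q /\
        nth -oo%E (run x pre) (nth 0 addrs u) = nth -oo%E vs u) ->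
   forall u, u <= size addrs ->
     nth -oo%E (run x (pre ++ opchain mk q addrs)) (q + u) = foldl f acc (take u vs).
Proof.
elim=> [|a s IH] [|v vs] pre q acc //= Hs Hacc Hsz Hr u Hu.
  by move: Hu; rewrite leqn0 => /eqP ->; rewrite cats0 addn0.
case: u Hu => [|u] Hu.
  by rewrite addn0 nth_run_cat ?Hs.
rewrite -cat_rcons -addSnnS.
have [Ha1 Ha2] := Hr 0 erefl.
apply: IH => //.
- by rewrite size_rcons Hs.
- rewrite run_rcons nth_rcons size_run Hs ltnn eqxx Hmk.
  by rewrite Hacc /= Ha2.
- by case: Hsz.
- move=> w Hw; have [H1 H2] := Hr w.+1 Hw; split; first by apply: leqW.
  rewrite run_rcons nth_rcons size_run Hs ifT //; lia.
Qed.

Fixpoint tri (o : nat) (L : seq (instr * \bar R)) : seq instr :=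
  if L is (ins, c) :: L' then [:: ins; ICst n c; IAdd R n o.+1 o] ++ tri (o + 3) L' else [::].

Lemma size_tri o L : size (tri o L) = 3 * size L.
Proof. elim: L o => [|[i c] L IH] o //=; rewrite IH; lia. Qed.

Lemma triP : forall L ws pre, size ws = size L ->
  (forall s W, s < size L ->
     eval_instr x (run x pre ++ W) (nth (ICst n -oo%E, -oo%E) L s).1 = nth -oo%E ws s) ->
  forall s, s < size L ->
    nth -oo%E (run x (pre ++ tri (size pre) L)) (size pre + 3 * s + 2) =
      ((nth (ICst n -oo%E, -oo%E) L s).2 + nth -oo%E ws s)%E.
Proof.
elim=> [|[ins c] L IH] [|w ws] pre //= Hsz Hev s Hs.
set pre' := pre ++ [:: ins; ICst n c; IAdd R n (size pre).+1 (size pre)].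
have Hrun : run x pre' = run x pre ++ [:: w; c; (c + w)%E].
  have -> : pre' = rcons (rcons (rcons pre ins) (ICst n c)) (IAdd R n (size pre).+1 (size pre)).
    by rewrite /pre' -!cats1 -!catA.
  rewrite !run_rcons'.
  have := Hev 0 [::] erefl; rewrite cats0 /= => ->.
  rewrite /= -!catA /= !nth_cat size_run /= ltnn subnn /=.
  rewrite ifF; last lia.
  by rewrite -addn1 addKn.
have Hsp : size pre' = size pre + 3 by rewrite /pre' size_cat.
have -> : pre ++ [:: ins, ICst n c, IAdd R n (size pre).+1 (size pre) & tri (size pre + 3) L] = pre' ++ tri (size pre') L.
  by rewrite Hsp /pre' -catA.
case: s Hs => [|s] Hs.
  rewrite nth_run_cat; last by rewrite Hsp; lia.
  rewrite Hrun nth_cat size_run ifF; last lia.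
  by rewrite muln0 addn0 addKn.
have -> : size pre + 3 * s.+1 + 2 = size pre' + 3 * s + 2 by rewrite Hsp; lia.
apply: IH => //; first by case: Hsz.
move=> s' W Hs'; rewrite Hrun -catA.
exact: (Hev s'.+1).
Qed.

End Run.

Section Math.
Variable R : realType.
Local Open Scope ereal_scope.

Lemma maxNy (v : \bar R) : Order.max -oo v = v. Proof. by rewrite max_r // leNye. Qed.
Lemma maxyN (v : \bar R) : Order.max v -oo = v. Proof. by rewrite max_l // leNye. Qed.
Lemma minyl (v : \bar R) : Order.min +oo v = v. Proof. by rewrite min_r // leey. Qed.
Lemma minyr (v : \bar R) : Order.min v +oo = v. Proof. by rewrite min_l // leey. Qed.

Lemma foldl_op (T : Type) (op : T -> T -> T) (opA : associative op) idx
  (idr : right_id idx op) : forall s acc, foldl op acc s = op acc (foldr op idx s).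
Proof. elim=> [|v s IH] acc /=; first by rewrite idr. by rewrite IH opA. Qed.

Lemma foldr_op_cat (T : Type) (op : T -> T -> T) (opA : associative op) idx
  (idl : left_id idx op) s1 s2 :
  foldr op idx (s1 ++ s2) = op (foldr op idx s1) (foldr op idx s2).
Proof. elim: s1 => [|v s IH] /=; first by rewrite idl. by rewrite IH opA. Qed.

Lemma foldr_op_rev (T : Type) (op : T -> T -> T) (opA : associative op)
  (opC : commutative op) idx (idl : left_id idx op) (idr : right_id idx op) s :
  foldr op idx (rev s) = foldr op idx s.
Proof.
elim: s => [|v s IH] //=; rewrite rev_cons -cats1 foldr_op_cat //= IH idr.
exact: opC.
Qed.

Lemma big_foldr (T I : Type) (op : T -> T -> T) idx (s : seq I) (P : pred I) (G : I -> T) :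
  \big[op/idx]_(j <- s | P j) G j = foldr op idx (map G [seq j <- s | P j]).
Proof. by rewrite foldrE big_map big_filter. Qed.

Lemma filter_notin (T : eqType) (i : T) s : i \notin s -> [seq j <- s | j != i] = s.
Proof.
elim: s => [|v s IH] //=; rewrite in_cons negb_or => /andP [h1 h2].
by rewrite eq_sym h1 IH.
Qed.

Lemma abo_max (I : eqType) (c : seq I) (G : I -> \bar R) i :
  uniq c -> i \in c ->
  let a := map G c in let t := index i c in
  Order.max (foldl Order.max -oo (take t a)) (foldl Order.max -oo (take (size c - t.+1) (rev a)))
  = foldr Order.max -oo (map G [seq j <- c | j != i]).
Proof.
move=> Hu Hi a t.
have Ht : (t < size c)%N by rewrite index_mem.
have Hc : c = take t c ++ i :: drop t.+1 c.
  by rewrite -[X in _ ++ X :: _](nth_index i Hi) -drop_nth // cat_take_drop.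
have Hu' := Hu; rewrite Hc cat_uniq /= negb_or in Hu'.
case/and4P: Hu' => _ /andP [/negP Hn1 _] /negP Hn2 _.
have Hn1' : i \notin take t c by apply/negP.
rewrite [in RHS]Hc filter_cat /= eqxx /= !filter_notin //; last by apply/negP.
rewrite map_cat /= foldr_op_cat //; [|exact: maxA|exact: maxNy].
rewrite !(foldl_op (@maxA _ _) (@maxyN)) .
rewrite !maxNy take_rev /a size_map.
have -> : (size c - (size c - t.+1) = t.+1)%N by lia.
rewrite foldr_op_rev //; [|exact: maxA|exact: maxC|exact: maxNy|exact: maxyN].
by rewrite /a map_take map_drop.
Qed.

End Math.

Lemma nth_map3 (T A B C : Type) (f : T -> A) (g : T -> B) (h : T -> C)
  (P : A -> B -> C -> Prop) da db dc :
  (forall j, P (f j) (g j) (h j)) ->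
  forall s t, t < size s -> P (nth da (map f s) t) (nth db (map g s) t) (nth dc (map h s) t).
Proof. move=> HP; elim=> [|v s IH] [|t] //= Ht; exact: IH. Qed.

Section Col.
Variables (R : realType) (n p : nat) (V : 'M[\bar R]_(n, p)).
Notation instr := (instr R n).

Definition csupp (k : 'I_p) : seq 'I_n := [seq j <- index_enum 'I_n | V j k != -oo%E].
Definition rsupp (i : 'I_n) : seq 'I_p := [seq k <- index_enum 'I_p | V i k != -oo%E].

Definition aaddr (o m : nat) := [seq o + 3 * t + 2 | t <- iota 0 m].

Definition colblk (o : nat) (k : 'I_p) : seq instr :=
  let c := csupp k in let m := size c in
  tri o (zip [seq IInp R j | j <- c] [seq V j k | j <- c]) ++
  ICst n -oo%E :: opchain (IMax R n) (o + 3 * m) (aaddr o m) ++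
  ICst n -oo%E :: opchain (IMax R n) (o + 4 * m + 1) (rev (aaddr o m)) ++
  tri (o + 5 * m + 2) (zip [seq IMax R n (o + 3 * m + t) (o + 4 * m + 1 + (m - t.+1)) | t <- iota 0 m]
                         [seq (- V j k)%E | j <- c]).

Lemma size_colblk o k : size (colblk o k) = 8 * size (csupp k) + 2.
Proof.
rewrite /colblk /aaddr; do 4 (rewrite ?size_cat ?size_tri ?size_opchain ?size_zip ?size_rev ?size_map ?size_iota /=).
rewrite ?minnn; lia.
Qed.

Variable x : 'I_n -> R.
Definition Gf (k : 'I_p) (j : 'I_n) := (V j k + (x j)%:E)%E.
Definition Ff (i : 'I_n) (k : 'I_p) :=
  (- V i k + \big[Order.max/-oo%E]_(j < n | j != i) (V j k + (x j)%:E))%E.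

Lemma inner_big k i : V i k != -oo%E ->
  \big[Order.max/-oo%E]_(j < n | j != i) (V j k + (x j)%:E)%E =
  foldr Order.max -oo%E (map (Gf k) [seq j <- csupp k | j != i]).
Proof.
move=> _; rewrite -big_foldr /csupp big_filter_cond.
rewrite big_mkcond [RHS]big_mkcond; apply: eq_bigr => j _ /=.
case: (boolP (V j k == -oo%E)) => [/eqP h|h] /=; last by [].
by rewrite /Gf h addNye; case: ifP.
Qed.

Lemma colblkP pre post k i : V i k != -oo%E ->
  nth -oo%E (run x (pre ++ colblk (size pre) k ++ post))
     (size pre + 5 * size (csupp k) + 4 + 3 * index i (csupp k)) = Ff i k.
Proof.
move=> Hik.
set o := size pre; set c := csupp k; set m := size c.
have Hic : i \in c by rewrite /c /csupp mem_filter Hik mem_index_enum.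
have Huc : uniq c by rewrite /c /csupp filter_uniq // index_enum_uniq.
set a := map (Gf k) c.
set L1 := zip [seq IInp R j | j <- c] [seq V j k | j <- c].
set pre1 := pre ++ tri o L1.
have Hs1 : size pre1 = o + 3 * m.
  by rewrite /pre1 size_cat size_tri /L1 size_zip !size_map minnn.
have HA : forall t, t < m -> nth -oo%E (run x pre1) (o + 3 * t + 2) = nth -oo%E a t.
  move=> t Ht; rewrite /pre1 /o (triP (ws := [seq (x j)%:E | j <- c])) //.
  - rewrite /L1 nth_zip ?size_map //=.
    apply: (@nth_map3 _ _ _ _ (fun j => V j k) (fun j => (x j)%:E) (Gf k)
             (fun u v w => (u + v)%E = w)) => //.
  - by rewrite /L1 size_zip !size_map minnn.
  - move=> s W; rewrite /L1 size_zip !size_map minnn => Hs.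
    rewrite nth_zip ?size_map //=.
    apply: (@nth_map3 _ _ _ _ (fun j => IInp R j) (fun j => (x j)%:E) (fun j => tt)
             (fun u v _ => eval_instr x (run x pre ++ W) u = v)) => //.
  - by rewrite /L1 size_zip !size_map minnn.
set aad := aaddr o m.
have Haad : size aad = m by rewrite /aad /aaddr size_map size_iota.
have Hna : size a = m by rewrite /a size_map.
set pre2 := rcons pre1 (ICst n -oo%E).
set ch1 := opchain (IMax R n) (o + 3 * m) aad.
have HP : forall t, t <= m -> nth -oo%E (run x (pre2 ++ ch1)) (o + 3 * m + t)
                              = foldl Order.max -oo%E (take t a).
  move=> t Ht; apply: (opchainP (f := Order.max)) => //.
  - by rewrite size_rcons Hs1.
  - by rewrite run_rcons nth_rcons size_run Hs1 ltnn eqxx.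
  - by rewrite Haad.
  - move=> u; rewrite Haad => Hu.
    rewrite /aad /aaddr (nth_map 0) ?size_iota // nth_iota //; split; first lia.
    rewrite /pre2 -cats1 nth_run_cat ?Hs1; last lia. by rewrite add0n HA.
  - by rewrite Haad.
set pre3 := rcons (pre2 ++ ch1) (ICst n -oo%E).
set ch2 := opchain (IMax R n) (o + 4 * m + 1) (rev aad).
have Hs2 : size (pre2 ++ ch1) = o + 4 * m + 1.
  rewrite size_cat size_rcons Hs1 /ch1 size_opchain Haad; lia.
have E3 : pre3 = pre1 ++ (ICst n -oo%E :: ch1 ++ [:: ICst n -oo%E]).
  by rewrite /pre3 /pre2 -!cats1 -!catA.
have HS : forall u, u <= m -> nth -oo%E (run x (pre3 ++ ch2)) (o + 4 * m + 1 + u)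
                              = foldl Order.max -oo%E (take u (rev a)).
  move=> u Hu; apply: (opchainP (f := Order.max)) => //.
  - by rewrite size_rcons Hs2.
  - by rewrite run_rcons nth_rcons size_run Hs2 ltnn eqxx.
  - by rewrite !size_rev Haad.
  - move=> w; rewrite size_rev Haad => Hw.
    rewrite nth_rev ?Haad // /aad /aaddr (nth_map 0) ?size_iota; last lia.
    rewrite nth_iota; last lia.
    split; first lia.
    rewrite E3 nth_run_cat ?Hs1; last lia.
    rewrite add0n HA; last lia.
    by rewrite nth_rev ?Hna.
  - by rewrite size_rev Haad.
set pre4 := pre3 ++ ch2.
have Hs4 : size pre4 = o + 5 * m + 2.
  rewrite /pre4 size_cat size_rcons Hs2 /ch2 size_opchain size_rev Haad; lia.
set L2 := zip [seq IMax R n (o + 3 * m + t) (o + 4 * m + 1 + (m - t.+1)) | t <- iota 0 m]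
              [seq (- V j k)%E | j <- c].
have HL2 : size L2 = m by rewrite /L2 size_zip !size_map size_iota minnn.
have E : pre ++ colblk o k ++ post = (pre4 ++ tri (size pre4) L2) ++ post.
  rewrite Hs4 /pre4 /pre3 /pre2 /pre1 /ch2 /ch1 /colblk /= -/c -/m -/aad.
  by rewrite -!cats1; do 5 rewrite -?catA /=.
set t := index i c.
have Ht : t < m by rewrite /t index_mem.
rewrite E nth_run_cat; last first.
  rewrite size_cat size_tri HL2 Hs4; lia.
have -> : o + 5 * m + 4 + 3 * t = size pre4 + 3 * t + 2 by rewrite Hs4; lia.
rewrite (triP (ws := [seq Order.max (foldl Order.max -oo%E (take t a))
                          (foldl Order.max -oo%E (take (m - t.+1) (rev a))) | t <- iota 0 m])).
- rewrite /L2 nth_zip ?size_map ?size_iota //= (nth_map i) // nth_index //.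
  rewrite (nth_map 0) ?size_iota // nth_iota // add0n.
  by rewrite /Ff inner_big // /m /a abo_max.
- by rewrite size_map size_iota HL2.
- move=> s W; rewrite HL2 => Hs.
  rewrite /L2 nth_zip ?size_map ?size_iota //= (nth_map 0) ?size_iota // nth_iota // add0n.
  rewrite (nth_map 0) ?size_iota // nth_iota // add0n.
  rewrite /= !nth_ext ?size_run ?Hs4; try lia.
  rewrite /pre4 HS; last lia.
  rewrite /pre3 cat_rcons nth_run_cat ?Hs2; last lia.
  by rewrite HP //; apply: ltnW.
- by rewrite HL2.
Qed.

End Col.

Lemma nth_map2in (T : eqType) (A B : Type) (f : T -> A) (g : T -> B)
  (P : A -> B -> Prop) da db s :
  (forall j, j \in s -> P (f j) (g j)) ->
  forall t, t < size s -> P (nth da (map f s) t) (nth db (map g s) t).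
Proof.
elim: s => [|v s IH] //= HP [|t] /= Ht; first by apply: HP; rewrite inE eqxx.
apply: IH => // j Hj; apply: HP; by rewrite inE Hj orbT.
Qed.

Section Blocks.
Variables (R : realType) (n : nat).
Notation instr := (instr R n).

Fixpoint blocks (T : eqType) (blk : nat -> T -> seq instr) (o : nat) (ks : seq T) : seq instr :=
  if ks is k :: ks' then blk o k ++ blocks blk (o + size (blk o k)) ks' else [::].
Fixpoint boff (T : eqType) (blk : nat -> T -> seq instr) (o : nat) (ks : seq T) (k : T) : nat :=
  if ks is k' :: ks' then (if k' == k then o else boff blk (o + size (blk o k')) ks' k) else o.

Lemma blocks_dec (T : eqType) blk (k : T) : forall ks o, k \in ks ->
  exists W post, blocks blk o ks = W ++ blk (o + size W) k ++ post /\ boff blk o ks k = o + size W.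
Proof.
elim=> [|k' ks IH] o //=; rewrite in_cons.
case: (eqVneq k' k) => [->|Hne] /= Hk.
  by exists [::], (blocks blk (o + size (blk o k)) ks); rewrite addn0.
have [W [post [E1 E2]]] := IH (o + size (blk o k')) Hk.
exists (blk o k' ++ W), post; rewrite E1 E2 size_cat !addnA -catA; split => //.
Qed.

Lemma size_blocks (T : eqType) blk (sz : T -> nat) (Hsz : forall o k, size (blk o k) = sz k) :
  forall ks o, size (blocks blk o ks) = \sum_(k <- ks) sz k.
Proof. elim=> [|k ks IH] o /=; first by rewrite big_nil. by rewrite size_cat IH Hsz big_cons. Qed.

End Blocks.

Section Main.
Variables (R : realType) (n p : nat) (V : 'M[\bar R]_(n, p)).

Definition colprog := blocks (colblk V) 0 (index_enum 'I_p).
Definition Baddr (k : 'I_p) (i : 'I_n) :=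
  boff (colblk V) 0 (index_enum 'I_p) k + 5 * size (csupp V k) + 4 + 3 * index i (csupp V k).
Definition rowblk (o : nat) (i : 'I_n) : seq (instr R n) :=
  ICst n +oo%E :: opchain (IMin R n) o [seq Baddr k i | k <- rsupp V i].
Definition fullprog := colprog ++ blocks rowblk (size colprog) (index_enum 'I_n).
Definition outf (i : 'I_n) := boff rowblk (size colprog) (index_enum 'I_n) i + size (rsupp V i).

Lemma colvals x k i Q : V i k != -oo%E ->
  Baddr k i < size colprog /\ nth -oo%E (run x (colprog ++ Q)) (Baddr k i) = Ff V x i k.
Proof.
move=> Hik.
have [W [post [E1 E2]]] := blocks_dec (colblk V) 0 (mem_index_enum k).
rewrite add0n in E1 E2.
have Hic : i \in csupp V k by rewrite mem_filter Hik mem_index_enum.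
have Ht : index i (csupp V k) < size (csupp V k) by rewrite index_mem.
rewrite /Baddr E2 /colprog E1; split.
  rewrite size_cat (size_cat (colblk _ _ _)) size_colblk; lia.
by rewrite -catA -(catA (colblk _ _ _)) colblkP.
Qed.

Lemma rowvals x i : nth -oo%E (run x fullprog) (outf i) = Top V x i.
Proof.
have [W [post [E1 E2]]] := blocks_dec rowblk (size colprog) (mem_index_enum i).
set pre := colprog ++ W.
set rs := rsupp V i.
have E : fullprog = (rcons pre (ICst n +oo%E) ++ opchain (IMin R n) (size pre) [seq Baddr k i | k <- rs]) ++ post.
  by rewrite /fullprog E1 /rowblk /pre size_cat -cats1 -!catA.
rewrite /outf E2 E nth_run_cat; last first.
  rewrite size_cat size_rcons size_opchain size_map /pre size_cat /rs; lia.
rewrite -size_cat -/pre -/rs.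
have -> : Top V x i = foldl Order.min +oo%E (take (size rs) [seq Ff V x i k | k <- rs]).
  rewrite take_oversize ?size_map // (foldl_op (@minA _ _) (@minyr _)) minyl.
  by rewrite /Top big_foldr.
apply: (opchainP (f := Order.min)) => //.
- by rewrite size_rcons.
- by rewrite run_rcons nth_rcons size_run ltnn eqxx.
- by rewrite !size_map.
- move=> u; rewrite size_map => Hu.
  apply: (@nth_map2in _ _ _ (fun k => Baddr k i) (fun k => Ff V x i k)
     (fun a v => a <= size pre /\ nth -oo%E (run x (rcons pre (ICst n +oo%E))) a = v)) => //.
  move=> k; rewrite mem_filter => /andP [Hik _].
  have [H1 H2] := colvals x (W ++ [:: ICst n +oo%E]) Hik.
  split; first by rewrite /pre size_cat; lia.
  by rewrite /pre -cats1 -catA.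
- by rewrite size_map.
Qed.

Lemma csz k : size (csupp V k) = \sum_(j < n) (V j k != -oo%E : nat).
Proof.
rewrite /csupp -sum1_size big_filter big_mkcond; apply: eq_bigr => j _.
by case: (V j k != -oo%E).
Qed.

Lemma rsz i : size (rsupp V i) = \sum_(k < p) (V i k != -oo%E : nat).
Proof.
rewrite /rsupp -sum1_size big_filter big_mkcond; apply: eq_bigr => k _.
by case: (V i k != -oo%E).
Qed.

Lemma card_supp : #|supp V| = \sum_(i < n) \sum_(k < p) (V i k != -oo%E : nat).
Proof.
rewrite /supp -sum1_card big_mkcond pair_bigA; apply: eq_bigr => -[i k] _.
by rewrite inE.
Qed.

Lemma size_bound : no_minf_row V -> no_minf_col V -> size fullprog <= 12 * #|supp V|.
Proof.
move=> Hrow Hcol.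
rewrite /fullprog size_cat /colprog
  (@size_blocks _ _ _ (colblk V) (fun k => 8 * size (csupp V k) + 2) (size_colblk V))
  (@size_blocks _ _ _ rowblk (fun i => (size (rsupp V i)).+1)); last first.
  by move=> o i; rewrite /= size_opchain size_map.
have Hc : forall k, 0 < size (csupp V k).
  move=> k; have [i Hi] := Hcol k.
  have : i \in csupp V k by rewrite mem_filter Hi mem_index_enum.
  by case: (csupp V k).
have Hr : forall i, 0 < size (rsupp V i).
  move=> i; have [k Hk] := Hrow i.
  have : k \in rsupp V i by rewrite mem_filter Hk mem_index_enum.
  by case: (rsupp V i).
have Hcs : \sum_(k < p) size (csupp V k) = #|supp V|.
  by rewrite card_supp exchange_big; apply: eq_bigr => k _; rewrite csz.
have Hrs : \sum_(i < n) size (rsupp V i) = #|supp V|.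
  by rewrite card_supp; apply: eq_bigr => i _; rewrite rsz.
apply: (@leq_trans (\sum_(k < p) 10 * size (csupp V k) + \sum_(i < n) 2 * size (rsupp V i))).
  apply: leq_add.
    by apply: leq_sum => k _; have := Hc k; lia.
  by apply: leq_sum => i _; have := Hr i; lia.
by rewrite -!big_distrr /= Hcs Hrs -mulnDl.
Qed.

End Main.

Local Open Scope ereal_scope.

Theorem proposition6p1 :
  exists C : nat,
    forall (R : realType) (n p : nat) (V : 'M[\bar R]_(n, p)),
      (forall i k, V i k != +oo) -> no_minf_row V -> no_minf_col V ->
      exists (prog : seq (instr R n)) (out : 'I_n -> nat),
        (size prog <= C * #|supp V|)%N /\
        forall (x : 'I_n -> R) (i : 'I_n),
          nth -oo (run x prog) (out i) = Top V x i.
Proof.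
exists 12%N => R n p V _ Hrow Hcol.
exists (fullprog V), (outf V); split; first exact: size_bound.
move=> x i; exact: rowvals.
Qed.
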